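(* Let $\mathcal{A}$ be a Banach algebra such that for every $a'''\in\mathcal{A}^{***}$ the mapping $a''\mapsto a''a'''$ from $\mathcal{A}^{**}$ into $\mathcal{A}^{***}$ is $\sigma(\mathcal{A}^{**},\mathcal{A}^* )$-to-$\sigma(\mathcal{A}^{***},\mathcal{A}^{**})$ continuous. If $\mathcal{A}^{**}$ is weakly amenable, then $\mathcal{A}$ is weakly amenable.
   Context: $\mathcal{A}^{**}$ carries the first Arens product: for $a,b\in\mathcal{A}$, $a'\in\mathcal{A}^*$, $a'',b''\in\mathcal{A}^{**}$, $\langle a'a,b\rangle=\langle a',ab\rangle$, $\langle b''a',a\rangle=\langle b'',a'a\rangle$, $\langle a''\cdot b'',a'\rangle=\langle a'',b''a'\rangle$. For $a'''\in\mathcal{A}^{***}$, $a''a'''\in\mathcal{A}^{***}$ is defined by $\langle a''a''',b''\rangle=\langle a''',b''\cdot a''\rangle$. A Banach algebra $B$ is weakly amenable if every bounded derivation $D:B\to B^*$ (with the dual bimodule structure on $B^*$) is inner, i.e. of the form $D(b)=b\phi-\phi b$ for some $\phi\in B^*$. *)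

(* Defs.v *)
From HB Require Import structures.
From mathcomp Require Import all_boot all_order all_algebra.
From mathcomp Require Import all_classical all_reals all_analysis.
From mathcomp Require Export complex.
Set Implicit Arguments. Unset Strict Implicit. Unset Printing Implicit Defensive.
Import Order.TTheory GRing.Theory Num.Theory.
Import numFieldNormedType.Exports.
Local Open Scope ring_scope.
Local Open Scope classical_set_scope.

Section Duals.
Variable K : numFieldType.

(* A (normed) vector space over K, presented by its carrier, its vector
   operations and the relation  snb x C  :<->  ||x|| <= C.  This presentation
   lets us iterate the dual-space construction (A, its dual, bidual, tridual). *)
Record space := Space {
  car :> Type;
  sadd : car -> car -> car;
  sscl : K -> car -> car;
  snb : car -> K -> Prop }.

Definition dualP (V : space) (f : V -> K) : Prop :=
  [/\ forall x y, f (sadd x y) = f x + f y,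
      forall k x, f (sscl k x) = k * f x &
      exists M : K, forall x C, snb x C -> `|f x| <= M * C].

Definition dual_car (V : space) := {f : V -> K | dualP f}.
Definition dval (V : space) (f : dual_car V) : V -> K := proj1_sig f.

Lemma dualP0 (V : space) : dualP (fun _ : V => 0).
Proof.
split => //; first by move=> *; rewrite addr0.
  by move=> *; rewrite mulr0.
by exists 0 => x C _; rewrite normr0 mul0r.
Qed.

Definition dzero (V : space) : dual_car V := exist _ _ (dualP0 V).

(* the functional f, as an element of V* (f is always a bounded linear
   functional where mkdual is used below; the default branch is never hit) *)
Definition mkdual (V : space) (f : V -> K) : dual_car V :=
  match pselect (dualP f) with
  | left p => exist _ f p
  | right _ => dzero V
  end.

Definition dual (V : space) : space :=
  @Space (dual_car V)
    (fun f g => mkdual (fun x => dval f x + dval g x))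
    (fun k f => mkdual (fun x => k * dval f x))
    (fun f C => forall x C', snb x C' -> `|dval f x| <= C * C').

Definition nspace (A : normedModType K) : space :=
  @Space A (fun x y => x + y) (fun k x => k *: x) (fun x C => `|x| <= C).

Definition banach_algebra_mul (A : normedModType K) (m : A -> A -> A) : Prop :=
  [/\ forall a b c, m a (m b c) = m (m a b) c,
      forall a b c, m (a + b) c = m a c + m b c,
      forall a b c, m a (b + c) = m a b + m a c,
      forall (k : K) a b, m (k *: a) b = k *: m a b /\ m a (k *: b) = k *: m a b &
      forall a b, `|m a b| <= `|a| * `|b| ].

Definition dact_l (B : space) (m : B -> B -> B) (b : B) (phi : dual B) : dual B :=
  mkdual (fun c => dval phi (m c b)).
Definition dact_r (B : space) (m : B -> B -> B) (phi : dual B) (b : B) : dual B :=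
  mkdual (fun c => dval phi (m b c)).
Definition dsub (V : space) (f g : dual V) : dual V :=
  mkdual (fun x => dval f x - dval g x).

(* First Arens product on A** :
   <a' a, b> = <a', a b>,  <b'' a', a> = <b'', a' a>,  <a''.b'', a'> = <a'', b'' a'> *)
Definition arens_aux (A : space) (m : A -> A -> A) (b'' : dual (dual A))
  (a' : dual A) : dual A :=
  mkdual (fun a => dval b'' (dact_r m a' a)).
Definition arens (A : space) (m : A -> A -> A) (a'' b'' : dual (dual A)) :
  dual (dual A) :=
  mkdual (fun a' => dval a'' (arens_aux m b'' a')).

Definition linear_map (V W : space) (T : V -> W) : Prop :=
  (forall x y, T (sadd x y) = sadd (T x) (T y)) /\
  (forall k x, T (sscl k x) = sscl k (T x)).
Definition bounded_map (V W : space) (T : V -> W) : Prop :=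
  exists M : K, forall x C, snb x C -> snb (T x) (M * C).
Definition is_derivation (B : space) (m : B -> B -> B) (D : B -> dual B) : Prop :=
  forall a b, D (m a b) = sadd (dact_l m a (D b)) (dact_r m (D a) b).

Definition weakly_amenable (B : space) (m : B -> B -> B) : Prop :=
  forall D : B -> dual B, linear_map D -> bounded_map D -> is_derivation m D ->
  exists phi : dual B, forall b, D b = dsub (dact_l m b phi) (dact_r m phi b).

Definition wstar_cvg (V : space) (F : set_system (dual V)) (x : dual V) : Prop :=
  forall v : V, (fun y : dual V => dval y v) @ F --> dval x v.

Definition wstar_continuous (V W : space) (T : dual V -> dual W) : Prop :=
  forall (F : set_system (dual V)) (x : dual V),
    Filter F -> wstar_cvg F x -> wstar_cvg (T @ F) (T x).

End Duals.

(* Main.v *)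
From Pilot Require Import Defs.
From HB Require Import structures.
From mathcomp Require Import all_boot all_order all_algebra.
From mathcomp Require Import all_classical all_reals all_analysis.
From mathcomp Require Import complex.
Import numFieldNormedType.Exports.
Set Implicit Arguments. Unset Strict Implicit. Unset Printing Implicit Defensive.
Import Order.TTheory GRing.Theory Num.Theory.
Local Open Scope ring_scope.

Section Gen.
Variable K : numFieldType.

Lemma mkdualE (V : Pilot.Defs.space K) (f : V -> K) : dualP f -> dval (mkdual f) = f.
Proof. by move=> Pf; rewrite /mkdual; case: pselect => [//|/(_ Pf) []]. Qed.

Lemma dual_ext (V : Pilot.Defs.space K) (f g : dual_car V) :
  (forall x, dval f x = dval g x) -> f = g.
Proof.
move: f g => [f Pf] [g Pg] /= H.
have E : f = g by apply: funext.
subst g; congr exist; exact: Prop_irrelevance.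
Qed.

Lemma dvalD (V : Pilot.Defs.space K) (f : dual_car V) x y :
  dval f (sadd x y) = dval f x + dval f y.
Proof. by case: f => g [] /=. Qed.

Lemma dvalZ (V : Pilot.Defs.space K) (f : dual_car V) k x :
  dval f (sscl k x) = k * dval f x.
Proof. by case: f => g [] /=. Qed.

Lemma dbound (V : Pilot.Defs.space K) (f : dual_car V) :
  exists M : K, forall x C, snb x C -> `|dval f x| <= M * C.
Proof. by case: f => g [] /=. Qed.

Lemma dualP_add (V : Pilot.Defs.space K) (f g : V -> K) :
  dualP f -> dualP g -> dualP (fun x => f x + g x).
Proof.
move=> [fD fZ [M1 fB]] [gD gZ [M2 gB]]; split.
- by move=> x y; rewrite fD gD addrACA.
- by move=> k x; rewrite fZ gZ mulrDr.
- exists (M1 + M2) => x C H; rewrite mulrDl.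
  by apply: le_trans (ler_normD _ _) _; apply: lerD; [apply: fB|apply: gB].
Qed.

Lemma dualP_scl (V : Pilot.Defs.space K) k (f : V -> K) :
  dualP f -> dualP (fun x => k * f x).
Proof.
move=> [fD fZ [M1 fB]]; split.
- by move=> x y; rewrite fD mulrDr.
- by move=> k' x; rewrite fZ mulrCA.
- exists (`|k| * M1) => x C H; rewrite normrM -mulrA.
  by apply: ler_wpM2l => //; apply: fB.
Qed.

Lemma dualP_sub (V : Pilot.Defs.space K) (f g : V -> K) :
  dualP f -> dualP g -> dualP (fun x => f x - g x).
Proof.
move=> Pf Pg; have := dualP_add Pf (dualP_scl (-1) Pg).
by congr dualP; apply: funext => x; rewrite mulN1r.
Qed.

Lemma saddE (V : Pilot.Defs.space K) (f g : dual_car V) x :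
  dval (@sadd _ (dual V) f g) x = dval f x + dval g x.
Proof. by rewrite /= mkdualE //; apply: dualP_add; apply: proj2_sig. Qed.

Lemma ssclE (V : Pilot.Defs.space K) k (f : dual_car V) x :
  dval (@sscl _ (dual V) k f) x = k * dval f x.
Proof. by rewrite /= mkdualE //; apply: dualP_scl; apply: proj2_sig. Qed.

Lemma dsubE (V : Pilot.Defs.space K) (f g : dual_car V) x :
  dval (dsub f g) x = dval f x - dval g x.
Proof. by rewrite /dsub mkdualE //; apply: dualP_sub; apply: proj2_sig. Qed.

Fixpoint allL {T} (L : seq T) (P : T -> Prop) : Prop :=
  if L is f :: L' then P f /\ allL L' P else True.

Lemma allL2 T (L : seq T) (P Q R : T -> Prop) :
  allL L P -> allL L Q -> (forall f, P f -> Q f -> R f) -> allL L R.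
Proof.
elim: L => [//|f L IH] /= [Pf PL] [Qf QL] H; split; first exact: H.
exact: IH.
Qed.

Variable A : normedModType K.
Local Notation N := (nspace A).

Lemma dvalDn (f : dual_car N) (x y : A) : dval f (x + y) = dval f x + dval f y.
Proof. exact: (dvalD f x y). Qed.
Lemma dvalZn (f : dual_car N) k (x : A) : dval f (k *: x) = k * dval f x.
Proof. exact: (dvalZ f k x). Qed.

Definition Kern (L : seq (dual_car N)) (x : A) := allL L (fun g => dval g x = 0).

Lemma KernD L x y : Kern L x -> Kern L y -> Kern L (x + y).
Proof. rewrite /Kern => Hx Hy. apply: (allL2 Hx Hy) => f a b. by rewrite dvalDn a b addr0. Qed.
Lemma KernZ L k x : Kern L x -> Kern L (k *: x).
Proof. rewrite /Kern => Hx. apply: (allL2 Hx Hx) => f a _. by rewrite dvalZn a mulr0. Qed.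

Lemma key (L : seq (dual_car N)) : forall f : dual_car N,
  (forall x, Kern L x -> dval f x = 0) ->
  forall (a'' : dual_car (dual N)) (a : A),
  allL L (fun g => dval g a = dval a'' g) -> dval f a = dval a'' f.
Proof.
elim: L => [|g L IH] f Hf a'' a HL.
  have f0 : forall x, dval f x = 0 by move=> x; exact: Hf.
  have E : f = @sscl _ (dual N) 0 f by apply: dual_ext => x; rewrite ssclE f0 mul0r.
  by rewrite {2}E dvalZ mul0r f0.
case: HL => Hg HL.
case: (pselect (forall x, Kern L x -> dval g x = 0)) => [Hg0|Hn].
  by apply: IH => // x Kx; apply: Hf; split => //; exact: Hg0.
have [x1 [Kx1 gx1]] : exists x1, Kern L x1 /\ dval g x1 != 0.
  case: (pselect (exists x1, Kern L x1 /\ dval g x1 != 0)) => [//|Hne].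
  exfalso; apply: Hn => x Kx; case: (eqVneq (dval g x) 0) => // nz.
  by exfalso; apply: Hne; exists x.
pose x0 := (dval g x1)^-1 *: x1.
have gx0 : dval g x0 = 1 by rewrite dvalZn mulVf.
have Kx0 : Kern L x0 by apply: KernZ.
pose f' := @sadd _ (dual N) f (@sscl _ (dual N) (- dval f x0) g).
have f'E : forall x, dval f' x = dval f x - dval f x0 * dval g x.
  by move=> x; rewrite saddE ssclE mulNr.
have := IH f' _ a'' a HL.
rewrite f'E (dvalD a'') (dvalZ a'') -Hg mulNr => /(_ _)/addIr; apply.
move=> x Kx; rewrite f'E.
have Ky : Kern (g :: L) (x + (- dval g x) *: x0).
  split; last by apply: KernD => //; apply: KernZ.
  by rewrite dvalDn dvalZn gx0 mulr1 subrr.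
have := Hf _ Ky; rewrite dvalDn dvalZn => H.
by rewrite -H mulNr (mulrC (dval g x)).
Qed.

Lemma interp (a'' : dual_car (dual N)) (L : seq (dual_car N)) :
  exists a : A, allL L (fun g => dval g a = dval a'' g).
Proof.
elim: L => [|g L [a0 Ha0]]; first by exists 0.
case: (pselect (exists x1, Kern L x1 /\ dval g x1 != 0)) => [[x1 [Kx1 gx1]]|Hne].
  pose x0 := (dval g x1)^-1 *: x1.
  have gx0 : dval g x0 = 1 by rewrite dvalZn mulVf.
  have Kx0 : Kern L x0 by apply: KernZ.
  exists (a0 + (dval a'' g - dval g a0) *: x0); split.
    by rewrite dvalDn dvalZn gx0 mulr1 addrC subrK.
  move: Kx0; rewrite /Kern => Kx0; apply: (allL2 Ha0 Kx0) => h H1 H2.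
  by rewrite dvalDn dvalZn H2 mulr0 addr0.
exists a0; split => //.
apply: (@key L g _ a'' a0 Ha0) => x Kx.
case: (eqVneq (dval g x) 0) => // nz.
by exfalso; apply: Hne; exists x.
Qed.

End Gen.

Section Main.
Variable K : numFieldType.
Variable A : normedModType K.
Local Notation N := (nspace A).
Local Notation A1 := (dual_car N).
Local Notation A2 := (dual_car (dual N)).
Local Notation A3 := (dual_car (dual (dual N))).
Variable m : A -> A -> A.
Hypothesis Hm : banach_algebra_mul m.

Lemma mDl a b c : m (a + b) c = m a c + m b c. Proof. by case: Hm. Qed.
Lemma mDr a b c : m a (b + c) = m a b + m a c. Proof. by case: Hm. Qed.
Lemma mZl k a b : m (k *: a) b = k *: m a b. Proof. by case: Hm => _ _ _ H _; case: (H k a b). Qed.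
Lemma mZr k a b : m a (k *: b) = k *: m a b. Proof. by case: Hm => _ _ _ H _; case: (H k a b). Qed.
Lemma mB a c C1 C2 : `|a| <= C1 -> `|c| <= C2 -> `|m a c| <= C1 * C2.
Proof.
move=> h1 h2; case: Hm => _ _ _ _ H; apply: le_trans (H a c) _.
exact: ler_pM.
Qed.

Lemma dnorm (V : Pilot.Defs.space K) (f : dual_car V) : exists M, @snb _ (dual V) f M.
Proof. exact: dbound. Qed.

Definition iota (a : A) : A2 := @mkdual _ (dual N) (fun a' => dval a' a).
Lemma iotaE a a' : dval (iota a) a' = dval a' a.
Proof.
rewrite /iota mkdualE //; split.
- by move=> x y; rewrite saddE.
- by move=> k x; rewrite ssclE.
- exists `|a| => f C H. rewrite mulrC. apply: H. exact: lexx.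
Qed.

Lemma drE (a' : A1) a c : dval (dact_r (B:=N) m a' a) c = dval a' (m a c).
Proof.
rewrite /dact_r mkdualE //; split.
- by move=> x y; rewrite /= mDr dvalDn.
- by move=> k x; rewrite /= mZr dvalZn.
- have [M HM] := dnorm a'; exists (M * `|a|) => x C H; rewrite -mulrA.
  by apply: HM; apply: mB.
Qed.

Lemma dlE (a' : A1) a c : dval (dact_l (B:=N) m a a') c = dval a' (m c a).
Proof.
rewrite /dact_l mkdualE //; split.
- by move=> x y; rewrite /= mDl dvalDn.
- by move=> k x; rewrite /= mZl dvalZn.
- have [M HM] := dnorm a'; exists (M * `|a|) => x C H; rewrite -mulrA [_ * C]mulrC.
  by apply: HM; apply: mB.
Qed.

Lemma dr_snb (a' : A1) a C C' : @snb _ (dual N) a' C -> `|a| <= C' ->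
  @snb _ (dual N) (dact_r (B:=N) m a' a) (C * C').
Proof.
move=> H ha c C'' hc; rewrite drE -mulrA; apply: H; exact: mB.
Qed.

Lemma aaE (b'' : A2) (a' : A1) a : dval (arens_aux (A:=N) m b'' a') a = dval b'' (dact_r (B:=N) m a' a).
Proof.
rewrite /arens_aux mkdualE //; split.
- move=> x y /=; rewrite -dvalD; congr dval; apply: dual_ext => c.
  by rewrite saddE !drE mDl dvalDn.
- move=> k x /=; rewrite -dvalZ; congr dval; apply: dual_ext => c.
  by rewrite ssclE !drE mZl dvalZn.
- have [Ma HMa] := dnorm a'; have [Mb HMb] := dnorm b''.
  exists (Mb * Ma) => x C H; rewrite -mulrA; apply: HMb; exact: dr_snb.
Qed.

Lemma aa_snb (b'' : A2) (a' : A1) Cb Ca : @snb _ (dual (dual N)) b'' Cb ->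
  @snb _ (dual N) a' Ca -> @snb _ (dual N) (arens_aux (A:=N) m b'' a') (Cb * Ca).
Proof.
move=> Hb Ha x C hx; rewrite aaE -mulrA; apply: Hb; exact: dr_snb.
Qed.

Lemma arE (a'' b'' : A2) (a' : A1) : dval (arens (A:=N) m a'' b'') a' = dval a'' (arens_aux (A:=N) m b'' a').
Proof.
rewrite /arens mkdualE //; split.
- move=> x y /=; rewrite -dvalD; congr dval; apply: dual_ext => c.
  rewrite saddE !aaE -dvalD; congr dval; apply: dual_ext => d.
  by rewrite saddE !drE saddE.
- move=> k x /=; rewrite -dvalZ; congr dval; apply: dual_ext => c.
  rewrite ssclE !aaE -dvalZ; congr dval; apply: dual_ext => d.
  by rewrite ssclE !drE ssclE.
- have [Ma HMa] := dnorm a''; have [Mb HMb] := dnorm b''.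
  exists (Ma * Mb) => x C H; rewrite -mulrA; apply: HMa; exact: aa_snb.
Qed.

Lemma ar_snb (a'' b'' : A2) Ca Cb : @snb _ (dual (dual N)) a'' Ca ->
  @snb _ (dual (dual N)) b'' Cb -> @snb _ (dual (dual N)) (arens (A:=N) m a'' b'') (Ca * Cb).
Proof.
move=> Ha Hb x C hx; rewrite arE -mulrA; apply: Ha; exact: aa_snb.
Qed.

Lemma dlE2 (phi : A3) (a'' c'' : A2) :
  dval (dact_l (@arens _ N m) a'' phi) c'' = dval phi (arens (A:=N) m c'' a'').
Proof.
rewrite /dact_l mkdualE //; split.
- move=> x y /=; rewrite -dvalD; congr dval; apply: dual_ext => c.
  by rewrite saddE !arE saddE.
- move=> k x /=; rewrite -dvalZ; congr dval; apply: dual_ext => c.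
  by rewrite ssclE !arE ssclE.
- have [Mp HMp] := dnorm phi; have [Ma HMa] := dnorm a''.
  exists (Mp * Ma) => x C H; rewrite -mulrA [Ma * C]mulrC; apply: HMp; exact: ar_snb.
Qed.

Lemma drE2 (phi : A3) (a'' c'' : A2) :
  dval (dact_r (@arens _ N m) phi a'') c'' = dval phi (arens (A:=N) m a'' c'').
Proof.
rewrite /dact_r mkdualE //; split.
- move=> x y /=; rewrite -dvalD; congr dval; apply: dual_ext => c.
  rewrite saddE !arE -dvalD; congr dval; apply: dual_ext => d.
  by rewrite saddE !aaE saddE.
- move=> k x /=; rewrite -dvalZ; congr dval; apply: dual_ext => c.
  rewrite ssclE !arE -dvalZ; congr dval; apply: dual_ext => d.
  by rewrite ssclE !aaE ssclE.
- have [Mp HMp] := dnorm phi; have [Ma HMa] := dnorm a''.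
  exists (Mp * Ma) => x C H; rewrite -mulrA; apply: HMp; exact: ar_snb.
Qed.

Lemma ar_iota a b : arens (A:=N) m (iota a) (iota b) = iota (m a b).
Proof. by apply: dual_ext => a'; rewrite arE iotaE aaE iotaE drE iotaE. Qed.


Variable D : N -> dual N.
Hypothesis Dlin : linear_map D.
Hypothesis Dbnd : bounded_map D.
Hypothesis Dder : is_derivation (B:=N) m D.

Definition Dstar (c'' : A2) : A1 := @mkdual _ N (fun x => dval c'' (D x)).

Lemma DstarE c'' x : dval (Dstar c'') x = dval c'' (D x).
Proof.
rewrite /Dstar mkdualE //; case: Dlin => HD HZ; split.
- by move=> x1 y1; cbv beta; rewrite HD dvalD.
- by move=> k x1; cbv beta; rewrite HZ dvalZ.
- have [MD HMD] := Dbnd; have [Mc HMc] := dnorm c''.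
  exists (Mc * MD) => y C H; rewrite -mulrA; apply: HMc; exact: HMD.
Qed.

Lemma Dstar_snb : exists MD, forall c'' C, @snb _ (dual (dual N)) c'' C ->
  @snb _ (dual N) (Dstar c'') (C * MD).
Proof.
have [MD HMD] := Dbnd; exists MD => c'' C H x C' hx.
rewrite DstarE -mulrA; apply: H; exact: HMD.
Qed.

Definition D2 (a'' : dual (dual N)) : dual (dual (dual N)) := @mkdual _ (dual (dual N)) (fun c'' => dval a'' (Dstar c'')).

Lemma D2E a'' c'' : dval (D2 a'') c'' = dval a'' (Dstar c'').
Proof.
rewrite /D2 mkdualE //; split.
- move=> x y /=; rewrite -dvalD; congr dval; apply: dual_ext => c.
  by rewrite saddE !DstarE saddE.
- move=> k x /=; rewrite -dvalZ; congr dval; apply: dual_ext => c.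
  by rewrite ssclE !DstarE ssclE.
- have [MD HMD] := Dstar_snb; have [Ma HMa] := dnorm a''.
  exists (Ma * MD) => x C H; rewrite -mulrA [MD * C]mulrC; apply: HMa; exact: HMD.
Qed.

Lemma D2lin : linear_map D2.
Proof.
split.
- by move=> x y; apply: dual_ext => c; rewrite D2E !saddE !D2E.
- by move=> k x; apply: dual_ext => c; rewrite D2E !ssclE !D2E.
Qed.

Lemma D2bnd : bounded_map D2.
Proof.
have [MD HMD] := Dstar_snb; exists MD => a'' C H c'' C' hc.
rewrite D2E; apply: le_trans (H _ _ (HMD _ _ hc)) _.
by rewrite [MD * C]mulrC -mulrA [MD * C']mulrC.
Qed.

Definition Prop_der (a'' b'' : A2) := forall c'' : A2,
  dval (arens (A:=N) m a'' b'') (Dstar c'') =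
  dval b'' (Dstar (arens (A:=N) m c'' a'')) + dval a'' (Dstar (arens (A:=N) m b'' c'')).

Lemma aa_iota a (a' : A1) : arens_aux (A:=N) m (iota a) a' = dact_l (B:=N) m a a'.
Proof. by apply: dual_ext => c; rewrite aaE iotaE drE dlE. Qed.

Lemma step1 a b : Prop_der (iota a) (iota b).
Proof.
move=> c''; rewrite arE iotaE aaE iotaE drE DstarE Dder dvalD.
rewrite !iotaE !DstarE !arE aa_iota !iotaE aaE.
by [].
Qed.


Lemma nf2 a (x'' c'' : A2) :
  (dval (arens (A:=N) m (iota a) x'') (Dstar c'') =
   dval x'' (Dstar (arens (A:=N) m c'' (iota a))) + dval (iota a) (Dstar (arens (A:=N) m x'' c''))) =
  (dval x'' (dact_r (B:=N) m (Dstar c'') a) =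
   dval x'' (Dstar (arens (A:=N) m c'' (iota a))) + dval x'' (arens_aux (A:=N) m c'' (D a))).
Proof. by rewrite arE iotaE aaE iotaE DstarE arE. Qed.

Lemma step2 a (b'' : A2) : Prop_der (iota a) b''.
Proof.
move=> c''; rewrite nf2.
have [b Hb] := interp b'' [:: dact_r (B:=N) m (Dstar c'') a;
   Dstar (arens (A:=N) m c'' (iota a)); arens_aux (A:=N) m c'' (D a)].
case: Hb => h1 [h2 [h3 _]].
have := step1 a b c''; rewrite nf2 !iotaE.
by rewrite h1 h2 h3.
Qed.

Lemma allL_cat T (L1 L2 : seq T) P : allL (L1 ++ L2) P -> allL L1 P /\ allL L2 P.
Proof. elim: L1 => [//|f L1 IH] /= [Pf /IH [H1 H2]]; by split. Qed.

Hypothesis Hcont : forall a''' : dual (dual (dual N)),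
  wstar_continuous (fun x : dual (dual N) => dact_l (@arens _ N m) x a''').

Lemma step3 (a'' b'' : A2) : Prop_der a'' b''.
Proof.
move=> c''.
suff E : dval b'' (Dstar (arens (A:=N) m c'' a'')) =
   dval a'' (arens_aux (A:=N) m b'' (Dstar c'')) - dval a'' (Dstar (arens (A:=N) m b'' c'')).
  by rewrite arE E subrK.
pose F : set_system (dual (dual N)) := fun S => exists L : seq A1,
   forall a, allL L (fun g => dval g a = dval a'' g) -> S (iota a).
have FF : Filter F.
  split.
  - by exists [::].
  - move=> P Q [L1 H1] [L2 H2]; exists (L1 ++ L2) => a /allL_cat [h1 h2].
    by split; [apply: H1|apply: H2].
  - by move=> P Q PQ [L H]; exists L => a Ha; apply: PQ; apply: H.
have PF : ProperFilter F.
  split => // -[L H]; have [a Ha] := interp a'' L; exact: H a Ha.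
have cvF : wstar_cvg F a''.
  move=> v; apply: (@cvg_near_cst _ _ _ _ _ FF).
  by exists [:: v] => a [Ha _]; rewrite /= iotaE.
have H := @Hcont (D2 b'') F a'' FF cvF c''.
have H2 : ((fun y : dual (dual (dual N)) => dval y c'') @
   ((fun x : dual (dual N) => dact_l (@arens _ N m) x (D2 b'')) @ F) -->
   (dval a'' (arens_aux (A:=N) m b'' (Dstar c'')) - dval a'' (Dstar (arens (A:=N) m b'' c''))))%classic.
  apply: cvg_near_cst.
  exists [:: arens_aux (A:=N) m b'' (Dstar c''); Dstar (arens (A:=N) m b'' c'')].
  move=> a [h1 [h2 _]] /=; rewrite dlE2 D2E.
  have S := step2 a b'' c''; rewrite arE !iotaE h1 h2 in S.
  by rewrite S addrK.
have := @cvg_unique _ (@norm_hausdorff _ K) _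
   (fmap_proper_filter _ (fmap_proper_filter _ PF)) _ _ H H2.
by rewrite dlE2 D2E.
Qed.

Lemma D2der : is_derivation (@arens _ N m) D2.
Proof.
move=> a'' b''; apply: dual_ext => c''.
rewrite D2E saddE dlE2 drE2 !D2E; exact: step3.
Qed.

Lemma psiE (phi : A3) x : dval (@mkdual _ N (fun a => dval phi (iota a))) x = dval phi (iota x).
Proof.
rewrite mkdualE //; split.
- move=> a b; cbv beta; rewrite -dvalD; congr dval; apply: dual_ext => f.
  by rewrite saddE !iotaE dvalD.
- move=> k a; cbv beta; rewrite -dvalZ; congr dval; apply: dual_ext => f.
  by rewrite ssclE !iotaE dvalZ.
- have [Mp HMp] := dnorm phi; exists Mp => a C H; apply: HMp => f C' Hf.
  by rewrite iotaE mulrC; apply: Hf.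
Qed.

Lemma inner : weakly_amenable (@arens _ N m) ->
  exists phi : dual N, forall b, D b = dsub (dact_l (B:=N) m b phi) (dact_r (B:=N) m phi b).
Proof.
move=> Hwa; have [phi Hphi] := Hwa D2 D2lin D2bnd D2der.
exists (@mkdual _ N (fun a => dval phi (iota a))) => b; apply: dual_ext => c.
rewrite dsubE dlE drE !psiE.
have := congr1 (fun f : dual (dual (dual N)) => dval f (iota c)) (Hphi (iota b)).
rewrite /= D2E iotaE DstarE iotaE dsubE dlE2 drE2 !ar_iota.
by [].
Qed.

End Main.

Theorem theorem2p11 (R : realType) (A : completeNormedModType R[i])
  (m : A -> A -> A) :
  banach_algebra_mul m ->
  (forall a''' : dual (dual (dual (nspace A))),
     wstar_continuous (fun a'' : dual (dual (nspace A)) => dact_l (@arens _ (nspace A) m) a'' a''')) ->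
  weakly_amenable (@arens _ (nspace A) m) ->
  @weakly_amenable _ (nspace A) m.
Proof.
move=> Hm Hcont Hwa D Dlin Dbnd Dder.
exact: (inner Hm Dlin Dbnd Dder Hcont Hwa).
Qed.
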